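(* Let $k\ge 1$ be an integer. For any graph $G$ with minimum degree $\delta(G)\ge k$, $\mathrm{TC}_k(G)\ge \delta(G)-k+2$. This bound is sharp, i.e., there exist graphs attaining equality.
   Context: All graphs are finite, simple and connected. $N(v)$ denotes the open neighborhood of a vertex $v$. For a graph $G$ with $\delta(G)\ge k$, a set $S\subseteq V(G)$ is a total $k$-dominating set if $|N(v)\cap S|\ge k$ for every $v\in V(G)$. Two disjoint sets $U,W\subseteq V(G)$ form a total $k$-coalition if neither $U$ nor $W$ is a total $k$-dominating set, but $U\cup W$ is. A total $k$-coalition partition of $G$ is a partition $\Omega$ of $V(G)$ such that every set in $\Omega$ forms a total $k$-coalition with some other set in $\Omega$. The total $k$-coalition number $\mathrm{TC}_k(G)$ is the maximum cardinality of a total $k$-coalition partition of $G$. *)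

(* Defs.v *)
From mathcomp Require Import all_boot.
Set Implicit Arguments. Unset Strict Implicit. Unset Printing Implicit Defensive.

Definition simple_graph (T : finType) (e : rel T) : Prop :=
  symmetric e /\ irreflexive e.

Definition connected_graph (T : finType) (e : rel T) : Prop :=
  forall x y : T, connect e x y.

Definition nbhd (T : finType) (e : rel T) (v : T) : {set T} := [set u | e v u].

(* minimum degree delta(G) (equals 0 only for the empty vertex set) *)
Definition min_degree (T : finType) (e : rel T) : nat :=
  \big[minn/#|T|]_(v : T) #|nbhd e v|.

Definition total_kdom (T : finType) (e : rel T) (k : nat) (S : {set T}) : bool :=
  [forall v : T, k <= #|nbhd e v :&: S|].

Definition total_kcoalition (T : finType) (e : rel T) (k : nat) (U W : {set T}) : bool :=
  [&& [disjoint U & W], ~~ total_kdom e k U, ~~ total_kdom e k W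
    & total_kdom e k (U :|: W)].

Definition tkc_partition (T : finType) (e : rel T) (k : nat) (P : {set {set T}}) : bool :=
  partition P [set: T] &&
  [forall U in P, exists W in P, total_kcoalition e k U W].

Definition TC (T : finType) (e : rel T) (k : nat) : nat :=
  \max_(P : {set {set T}} | tkc_partition e k P) #|P|.

(* Main.v *)
Require Import Defs.
From mathcomp Require Import all_boot.
From mathcomp Require Import zify.
Set Implicit Arguments. Unset Strict Implicit. Unset Printing Implicit Defensive.

Lemma mindeg_le (T : finType) (e : rel T) w : min_degree e <= #|nbhd e w|.
Proof.
rewrite /min_degree; have : w \in index_enum T by rewrite mem_index_enum.
elim: (index_enum T) => [//|a s IH]; rewrite inE big_cons => /orP[/eqP<-|/IH H].
  exact: geq_minl.
exact: leq_trans (geq_minr _ _) H.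
Qed.

Lemma mindeg_attained (T : finType) (e : rel T) (w : T) :
  exists v, min_degree e = #|nbhd e v|.
Proof.
have : min_degree e = #|T| \/ exists v, min_degree e = #|nbhd e v|.
  rewrite /min_degree; apply: (big_ind (fun m => m = #|T| \/ exists v, m = #|nbhd e v|)).
  - by left.
  - move=> x y Hx Hy; rewrite /minn; by case: ltnP.
  - by move=> i _; right; exists i.
case=> // H; exists w; apply/eqP; rewrite eqn_leq mindeg_le H.
by rewrite max_card.
Qed.

Lemma subset_card (T : finType) (S : {set T}) n : n <= #|S| ->
  exists A : {set T}, A \subset S /\ #|A| = n.
Proof.
move=> Hn; exists [set x in take n (enum S)]; split.
  by apply/subsetP=> x; rewrite inE => /mem_take; rewrite mem_enum.
rewrite cardsE (card_uniqP _); last by rewrite take_uniq // enum_uniq.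
by rewrite size_take -cardE; case: ifP => // H; apply/eqP; rewrite eqn_leq Hn leqNgt H.
Qed.

Lemma mindeg_le_card (T : finType) (e : rel T) : min_degree e <= #|T|.
Proof.
rewrite /min_degree; apply: (big_ind (fun m => m <= #|T|)) => //.
- by move=> x y Hx _; exact: leq_trans (geq_minl _ _) Hx.
- by move=> i _; exact: max_card.
Qed.

Lemma part1 (T : finType) (e : rel T) (k : nat) (hk : 1 <= k) :
  simple_graph e -> k <= min_degree e -> min_degree e - k + 2 <= TC e k.
Proof.
move=> [esym eirr] hd.
set d := min_degree e in hd *.
have [w _] : exists w : T, true.
  case: (pickP (@predT T)) => [w _|H]; first by exists w.
  have : #|T| = 0 by apply: eq_card0.
  by move=> H0; move: (mindeg_le_card e); rewrite -/d H0 leqn0 => /eqP H1; rewrite H1 in hd; case: k hk hd.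
have [v dv] := mindeg_attained e w.
have [A [AN cA]] := @subset_card T (nbhd e v) (d - k + 1) ltac:(rewrite -dv; case: k hk hd => // k' _ hd'; rewrite addn1 subnSK //; exact: leq_subr).
set B := ~: A.
have vB : v \in B.
  rewrite inE; apply/negP => /(subsetP AN); by rewrite inE eirr.
have ndB : ~~ total_kdom e k B.
  rewrite /total_kdom negb_forall; apply/existsP; exists v; rewrite -ltnNge.
  rewrite -setDE cardsD (setIidPr AN) cA -dv -/d.
  have := hk; have := hd; clear; move=> *; lia.
have nd1 : forall x, ~~ total_kdom e k [set x].
  move=> x; rewrite /total_kdom negb_forall; apply/existsP; exists x; rewrite -ltnNge.
  apply: leq_trans hk; rewrite ltnS leqn0 cards_eq0; apply/eqP/setP => y; rewrite !inE.
  by apply/negP => /andP[H /eqP Hy]; subst; rewrite eirr in H.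
have dom : forall x, x \in A -> total_kdom e k ([set x] :|: B).
  move=> x xA; apply/forallP => u.
  have h1 := cardsID ([set x] :|: B) (nbhd e u).
  have h2 : #|nbhd e u :\: ([set x] :|: B)| <= #|A :\ x|.
    apply: subset_leq_card; apply/subsetP => y; rewrite !inE negb_or negbK.
    by case/andP => /andP[-> ->].
  have h3 := cardsD1 x A; rewrite xA in h3.
  have h4 := mindeg_le e u; rewrite -/d in h4.
  move: h1 h2 h3 h4; rewrite cA; clear -hk hd; move=> *; lia.
have coal : forall x, x \in A -> total_kcoalition e k [set x] B /\ total_kcoalition e k B [set x].
  move=> x xA; have dj : [disjoint [set x] & B] by rewrite disjoints1 inE xA.
  split; apply/and4P; split; rewrite ?ndB ?nd1 ?dom //.
  - by rewrite disjoint_sym.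
  - by rewrite setUC dom.
set P := B |: [set [set x] | x in A].
have BnI : B \notin [set [set x] | x in A].
  apply/imsetP => -[x xA hB]; move: vB; rewrite hB inE => /eqP vx; subst x.
  by move: (subsetP AN v xA); rewrite inE eirr.
have cP : #|P| = d - k + 2.
  by rewrite cardsU1 BnI card_imset; [rewrite cA; clear; lia | exact: set1_inj].
have tP : tkc_partition e k P.
  apply/andP; split.
  - apply/and3P; split.
    + apply/eqP/setP => y; rewrite inE; apply/bigcupP.
      case yA: (y \in A).
        by exists [set y]; rewrite ?set11 // !inE; apply/orP; right; apply/imsetP; exists y.
      by exists B; rewrite !inE ?eqxx ?yA.
    + apply/trivIsetP => U W; rewrite !inE => /orP[/eqP->|/imsetP[x xA ->]] /orP[/eqP->|/imsetP[y yA ->]]; rewrite ?eqxx // => neq.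
      * by rewrite disjoint_sym disjoints1 inE yA.
      * by rewrite disjoints1 inE xA.
      * rewrite disjoints1 inE; apply/negP => /eqP xy; subst; by rewrite eqxx in neq.
    + rewrite !inE negb_or; apply/andP; split.
        by apply/negP => /eqP hB; move: vB; rewrite -hB inE.
      apply/imsetP => -[x _ H]; have : x \in (set0 : {set T}) by rewrite H set11.
      by rewrite inE.
  - apply/forallP => U; apply/implyP; rewrite !inE => /orP[/eqP->|/imsetP[x xA ->]].
    + have : 0 < #|A| by rewrite cA addn1.
      case/card_gt0P => x0 x0A; apply/existsP; exists [set x0].
      rewrite !inE (proj2 (coal x0 x0A)) andbT; apply/orP; right; apply/imsetP; by exists x0.
    + apply/existsP; exists B; by rewrite !inE eqxx (proj1 (coal x xA)).
rewrite -cP /TC; exact: (@leq_bigmax_cond _ (fun Q => tkc_partition e k Q) (fun Q : {set {set T}} => #|Q|) P tP).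
Qed.

Section Ex.
Variable k : nat.
Hypothesis hk : 1 <= k.
Definition Ke : rel 'I_k.+1 := fun x y => x != y.

Lemma Kn v : #|nbhd Ke v| = k.
Proof.
have -> : nbhd Ke v = [set~ v] by apply/setP => u; rewrite !inE eq_sym.
by rewrite cardsC1 card_ord.
Qed.

Lemma Kmin : min_degree Ke = k.
Proof. by have [v ->] := mindeg_attained Ke ord0; rewrite Kn. Qed.

Lemma Kdom S : total_kdom Ke k S -> S = setT.
Proof.
move/forallP => H; apply/setP => w; rewrite inE.
pose y : 'I_k.+1 := if w == ord0 then ord_max else ord0.
have yw : y != w.
  rewrite /y; case: (eqVneq w ord0) => [->|wn]; last by rewrite eq_sym.
  by apply/eqP => /(congr1 val) /=; case: k hk.
have Hc : #|nbhd Ke y| <= #|nbhd Ke y :&: S| by rewrite Kn; exact: H y.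
have : nbhd Ke y :&: S == nbhd Ke y by rewrite eqEcard subsetIl Hc.
move/eqP/setP/(_ w); rewrite !inE /Ke yw /=; by move=> ->.
Qed.

Lemma Ksimple : simple_graph Ke.
Proof. by split; [move=> x y; rewrite /Ke eq_sym | move=> x; rewrite /Ke eqxx]. Qed.

Lemma KTC : TC Ke k = 2.
Proof.
apply/eqP; rewrite eqn_leq; apply/andP; split; last first.
  have := part1 hk (e := Ke) Ksimple.
  by rewrite Kmin subnn => /(_ (leqnn k)).
apply/bigmax_leqP => P /andP[/and3P[/eqP cov triv n0] /forallP co].
case: (set_0Vmem P) => [->|[U UP]]; first by rewrite cards0.
have /existsP[W /andP[WP /and4P[_ _ _ /Kdom UW]]] := implyP (co U) UP.
have : P \subset [set U; W].
  apply/subsetP => Z ZP; rewrite !inE.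
  case: (set_0Vmem Z) => [Z0|[z zZ]]; first by rewrite -Z0 ZP in n0.
  have : z \in U :|: W by rewrite UW inE.
  rewrite inE => /orP[zU|zW].
    by rewrite -(def_pblock triv ZP zZ) (def_pblock triv UP zU) eqxx.
  by rewrite -(def_pblock triv ZP zZ) (def_pblock triv WP zW) eqxx orbT.
move/subset_leq_card; rewrite cards2 => H; apply: leq_trans H _; by case: (U != W).
Qed.
End Ex.

Theorem theorem3p1 (k : nat) (hk : 1 <= k) :
  (forall (T : finType) (e : rel T),
      simple_graph e -> connected_graph e -> k <= min_degree e ->
      min_degree e - k + 2 <= TC e k)
  /\
  (exists (T : finType) (e : rel T),
      [/\ simple_graph e, connected_graph e, k <= min_degree e &
          TC e k = min_degree e - k + 2]).
Proof.
split.
  by move=> T e hs _ hd; exact: part1.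
exists 'I_k.+1, (@Ke k); split.
- exact: Ksimple.
- move=> x y; case: (eqVneq x y) => [->|xy]; first exact: connect0.
  by apply: connect1.
- by rewrite Kmin.
- by rewrite Kmin (KTC hk) subnn.
Qed.
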